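(* For all integers $n\ge 2$ and $d\ge 1$, $$\left(\frac{(n-1)n^{n-2}}{2}\right)^d\le N(n,d)\le \binom{n}{2}^{nd}.$$
   Context: A (general) pedigree $\mathcal{T}(X_0)$ on a set $X_0$ is a finite directed graph on a vertex set $V$ such that: every vertex has out-degree $0$ or $2$; $X_0\subseteq V$ and every vertex of $X_0$ has in-degree $0$; there are no isolated vertices; vertices of $X_0$ are extant. A discrete generation pedigree of depth $d$ on $X_0$ has vertex set $V=\bigcup_{i=0}^d X_i$ with the $X_i$ disjoint, $X_d$ the set of vertices of out-degree $0$, and every vertex of $X_i$ ($i<d$) having its two out-arcs (to its two parents) in $X_{i+1}$. $N(n,d)$ denotes the number of discrete generation pedigrees of depth $d$ with $|X_i|=n$ for all $0\le i\le d$, on a fixed labelled extant set $X_0$, counted up to isomorphisms (arc-preserving bijections) that fix every vertex of $X_0$; all other vertices are unlabelled. *)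

(* Defs.v *)
From HB Require Import structures.
From mathcomp Require Import all_boot all_order all_algebra all_fingroup.
Set Implicit Arguments. Unset Strict Implicit. Unset Printing Implicit Defensive.

(* Vertices of a discrete generation pedigree of depth d with |X_i| = n:
   vertex (i, j) is the j-th vertex of generation X_i.  The extant set X_0
   is the fixed labelled set {(0, j) | j < n}. *)
Definition pvert (n d : nat) : finType := ('I_d.+1 * 'I_n)%type.

(* A pedigree is given by its arc set (arcs go from a child to a parent). *)
Definition parcs (n d : nat) : finType := {set (pvert n d * pvert n d)}.

Definition is_dgped (n d : nat) (A : parcs n d) : bool :=
  [&& [forall u : pvert n d, forall v : pvert n d,
        ((u, v) \in A) ==> (nat_of_ord v.1 == (nat_of_ord u.1).+1)],
      [forall u : pvert n d,
        (nat_of_ord u.1 < d) ==> (#|[set v | (u, v) \in A]| == 2)] &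
      [forall u : pvert n d, exists v : pvert n d,
        ((u, v) \in A) || ((v, u) \in A)]].

Definition ped_iso (n d : nat) (A B : parcs n d) : bool :=
  [exists f : {perm pvert n d},
    [forall j : 'I_n, f (ord0, j) == (ord0, j)] &&
    [forall u : pvert n d, forall v : pvert n d,
       ((u, v) \in A) == ((f u, f v) \in B)]].

Definition Nped (n d : nat) : nat :=
  #|[set [set B : parcs n d | is_dgped B && ped_iso A B]
       | A in [set A : parcs n d | is_dgped A]]|.

(* Main.v *)
Require Import Defs.
From HB Require Import structures.
From mathcomp Require Import all_boot all_order all_algebra all_fingroup.
Set Implicit Arguments. Unset Strict Implicit. Unset Printing Implicit Defensive.
Section Prufer.
Variable T : finType.
Implicit Types (a b : seq T) (S : {set T}) (x y : T).

Definition pl (a : seq T) (S : {set T}) (x : T) : T :=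
  odflt x [pick y in S :\: [set z in a]].

Fixpoint pdec (a : seq T) (S : {set T}) : seq {set T} :=
  match a with
  | [::] => [:: S]
  | x :: a' => [set pl (x :: a') S x; x] :: pdec a' (S :\ pl (x :: a') S x)
  end.

Lemma pl_spec a S x : {subset a <= S} -> #|S| = (size a).+2 ->
  pl a S x \in S /\ pl a S x \notin a.
Proof.
move=> sub cS; rewrite /pl; case: pickP => [y|].
  by rewrite !inE => /andP[-> ->].
move=> H; exfalso.
have : #|[set z in a]| < #|S|.
  rewrite cS cardsE; apply: leq_trans (card_size a) _; exact: leqnSn.
move=> lt; have /subset_leq_card : S \subset [set z in a].
  by apply/subsetP=> y yS; move: (H y); rewrite !inE yS andbT => /negbFE.
by rewrite leqNgt lt.
Qed.

Lemma pl_inv x a S : {subset x :: a <= S} -> #|S| = (size a).+3 ->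
  let l := pl (x :: a) S x in
  [/\ l \in S, l \notin x :: a, {subset a <= S :\ l} & #|S :\ l| = (size a).+2].
Proof.
move=> sub cS /=; have [lS la] := pl_spec x sub cS.
split => //.
  move=> y ya; rewrite !inE (sub y) ?inE ?ya ?orbT // andbT.
  by apply: contraNneq la => <-; rewrite inE ya orbT.
by move: cS; rewrite (cardsD1 (pl (x :: a) S x)) lS add1n => -[].
Qed.

Lemma pdec_range a S : {subset a <= S} -> #|S| = (size a).+2 ->
  forall e, e \in pdec a S -> e \subset S.
Proof.
elim: a S => [|x a IH] S sub cS e /=.
  by rewrite inE => /eqP ->.
have [lS la sub' cS'] := pl_inv sub cS.
rewrite inE => /orP[/eqP ->|].
  apply/subsetP=> y; rewrite !inE => /orP[]/eqP->; first exact: lS.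
  by apply: sub; rewrite inE eqxx.
move/(IH _ sub' cS') => H; apply: subset_trans H _; exact: subsetDl.
Qed.

Lemma pdec_deg a S : {subset a <= S} -> #|S| = (size a).+2 ->
  forall z, z \in S -> count (fun e : {set T} => z \in e) (pdec a S) = (count_mem z a).+1.
Proof.
elim: a S => [|x a IH] S sub cS z zS /=.
  by rewrite zS.
have [lS la sub' cS'] := pl_inv sub cS.
set l := pl (x :: a) S x in lS la sub' cS' *.
have [->|nzl] := eqVneq z l.
  rewrite !inE eqxx /=.
  have -> : count (fun e : {set T} => l \in e) (pdec a (S :\ l)) = 0.
    apply/eqP; rewrite -leqn0 leqNgt -has_count; apply/hasP => [[e eI le]].
    by move/subsetP: (pdec_range sub' cS' eI) => /(_ _ le); rewrite !inE eqxx.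
  move: la; rewrite inE negb_or => /andP[nlx nla].
  by rewrite eq_sym (negbTE nlx) /= (count_memPn nla).
rewrite IH //; last by rewrite !inE nzl.
by rewrite !inE (negbTE nzl) /= eq_sym addnS.
Qed.

Lemma pdec_card2 a S : {subset a <= S} -> #|S| = (size a).+2 ->
  forall e, e \in pdec a S -> #|e| = 2.
Proof.
elim: a S => [|x a IH] S sub cS e /=.
  by rewrite inE => /eqP ->.
have [lS la sub' cS'] := pl_inv sub cS.
rewrite inE => /orP[/eqP ->|]; last exact: IH.
rewrite cards2; move: la; rewrite inE negb_or => /andP[-> _]; done.
Qed.

Lemma pdec_uniq a S : {subset a <= S} -> #|S| = (size a).+2 -> uniq (pdec a S).
Proof.
elim: a S => [|x a IH] S sub cS //=.
have [lS la sub' cS'] := pl_inv sub cS.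
rewrite IH // andbT; apply/negP => /(pdec_range sub' cS') /subsetP /(_ (pl (x :: a) S x)).
by rewrite !inE eqxx /= => /(_ isT).
Qed.

Lemma pdec_size a S : size (pdec a S) = (size a).+1.
Proof. by elim: a S => [|x a IH] S //=; rewrite IH. Qed.

Lemma pdec_inj a b S : {subset a <= S} -> #|S| = (size a).+2 ->
  {subset b <= S} -> #|S| = (size b).+2 ->
  perm_eq (pdec a S) (pdec b S) -> a = b.
Proof.
elim: a b S => [|x a IH] [|y b] S suba cSa subb cSb //=.
- by rewrite cSb in cSa.
- by rewrite cSb in cSa.
move=> pe.
have memab : forall z, (z \in x :: a) = (z \in y :: b).
  move=> z; case zS: (z \in S); last first.
    by apply/idP/idP => [/suba|/subb]; rewrite zS.
  have := pdec_deg suba cSa zS; have := pdec_deg subb cSb zS.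
  move/seq.permP: pe => -> -> [] /eqP.
  have h s : (z \in s) = (0 < count_mem z s) by rewrite -has_count has_pred1.
  by move=> /eqP E; rewrite !h /= E.
have eqpl : pl (x :: a) S x = pl (y :: b) S y.
  have E : [set z in x :: a] = [set z in y :: b] by apply/setP=> z; rewrite !in_set memab.
  rewrite /pl E; case: pickP => //= H.
  have [h1 h2] := pl_spec y subb cSb.
  by move: (H (pl (y :: b) S y)); rewrite /= in_setD in_set h1 h2.
move: pe; rewrite /= -eqpl.
have [lS la sub' cS'] := pl_inv suba cSa.
have [lS2 lb sub2 cS2] := pl_inv subb cSb.
rewrite -eqpl in lS2 lb sub2 cS2.
set l := pl (x :: a) S x in lS la sub' cS' lS2 lb sub2 cS2 *.
move=> pe.
have exy : [set l; x] = [set l; y].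
  have : [set l; x] \in [set l; y] :: pdec b (S :\ l).
    by rewrite -(perm_mem pe) inE eqxx.
  rewrite inE => /orP[/eqP //|/(pdec_range sub2 cS2)/subsetP/(_ l)].
  by rewrite !inE eqxx /= => /(_ isT).
have xy : x = y.
  have : x \in [set l; y] by rewrite -exy !inE eqxx orbT.
  rewrite !inE => /orP[/eqP xl|/eqP //].
  by move: la; rewrite xl inE eqxx.
rewrite -xy in pe cS2 sub2 *; rewrite perm_cons in pe.
by rewrite (IH b (S :\ l)).
Qed.

End Prufer.
Definition cov n : {set {ffun 'I_n -> {set 'I_n}}} :=
  [set c : {ffun 'I_n -> {set 'I_n}} | [forall j, #|c j| == 2] && [forall k, [exists j, k \in c j]]].

Definition D0 m := setX (setX [set: {perm 'I_m.+1}] [set: m.-tuple 'I_m.+2])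
                       [set p : {set 'I_m.+2} | #|p| == 2].

Definition mkc m (x : {perm 'I_m.+1} * m.-tuple 'I_m.+2 * {set 'I_m.+2}) :
  {ffun 'I_m.+2 -> {set 'I_m.+2}} :=
  [ffun j => match unlift ord_max j with
             | Some j' => nth set0 (pdec (val x.1.2) setT) (x.1.1 j')
             | None => x.2 end].

Lemma card_D0 m : #|D0 m| = (m.+1)`! * (m.+2) ^ m * 'C(m.+2, 2).
Proof.
by rewrite /D0 !cardsX !cardsT card_Sn card_tuple card_ord card_draws card_ord.
Qed.

Lemma inv_tup m (a : m.-tuple 'I_m.+2) :
  {subset val a <= [set: 'I_m.+2]} /\ #|[set: 'I_m.+2]| = (size (val a)).+2.
Proof. by split; [move=> y; rewrite inE | rewrite cardsT card_ord size_tuple]. Qed.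

Lemma perm_nth_perm (U : finType) k (E : seq {set U}) (pi : {perm 'I_k}) : size E = k ->
  perm_eq E [seq nth set0 E (pi j) | j <- enum 'I_k].
Proof.
move=> sE.
have -> : [seq nth set0 E (pi j) | j <- enum 'I_k] =
          map (fun i : 'I_k => nth set0 E i) (map pi (enum 'I_k)).
  exact: (map_comp (fun i : 'I_k => nth set0 E i) pi (enum 'I_k)).
have pe : perm_eq (map pi (enum 'I_k)) (enum 'I_k).
  apply: uniq_perm.
  - by rewrite (map_inj_uniq (@perm_inj _ pi)) enum_uniq.
  - exact: enum_uniq.
  by move=> i; rewrite mem_enum; apply/mapP; exists ((pi^-1)%g i); rewrite ?mem_enum ?permKV.
rewrite perm_sym; apply: (perm_trans (perm_map _ pe)).
have -> : map (fun i : 'I_k => nth set0 E i) (enum 'I_k) = map (nth set0 E) (map val (enum 'I_k)).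
  by rewrite -map_comp.
by rewrite val_enum_ord -sE -/(mkseq _ _) mkseq_nth.
Qed.

Lemma mkc_inj m : {in D0 m &, injective (@mkc m)}.
Proof.
move=> [[pi a] p] [[pi' b] q] _ _ /= E.
have Hp : p = q by have := congr1 (fun f : {ffun 'I_m.+2 -> {set 'I_m.+2}} => f ord_max) E; rewrite /mkc !ffunE unlift_none.
have Hn : forall j : 'I_m.+1, nth set0 (pdec a setT) (pi j) = nth set0 (pdec b setT) (pi' j).
  move=> j; have := congr1 (fun f : {ffun 'I_m.+2 -> {set 'I_m.+2}} => f (lift ord_max j)) E.
  by rewrite /mkc !ffunE liftK.
have [sa ca] := inv_tup a; have [sb cb] := inv_tup b.
have sza : size (pdec a setT) = m.+1 by rewrite pdec_size size_tuple.
have szb : size (pdec b setT) = m.+1 by rewrite pdec_size size_tuple.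
have ab : a = b.
  apply: val_inj; apply: (pdec_inj sa ca sb cb).
  apply: (perm_trans (perm_nth_perm pi sza)); rewrite perm_sym.
  apply: (perm_trans (perm_nth_perm pi' szb)).
  by rewrite (eq_map Hn).
subst b q.
have -> : pi = pi'.
  apply/permP => j; apply: val_inj; apply/eqP.
  rewrite -(nth_uniq set0 _ _ (pdec_uniq sa ca)) ?sza ?ltn_ord // Hn //.
done.
Qed.

Lemma mkc_cov m x : x \in D0 m -> mkc x \in cov m.+2.
Proof.
case: x => [[pi a] p]; rewrite /D0 !inE /= => /eqP cp.
have [sa ca] := inv_tup a.
have sza : size (pdec a setT) = m.+1 by rewrite pdec_size size_tuple.
apply/andP; split.
  apply/forallP => j; rewrite /mkc ffunE /=; case: unliftP => [j' _|_]; last by rewrite cp.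
  by rewrite (pdec_card2 sa ca) // mem_nth // sza ltn_ord.
apply/forallP => k.
have : 0 < count (fun e : {set 'I_m.+2} => k \in e) (pdec a setT).
  by rewrite (pdec_deg sa ca) // inE.
rewrite -has_count => /hasP [e eI ke].
have ilt : index e (pdec a setT) < m.+1 by rewrite -[X in _ < X]sza index_mem.
apply/existsP; exists (lift ord_max ((pi^-1)%g (Ordinal ilt))).
by rewrite /mkc ffunE liftK /= permKV /= nth_index.
Qed.

Lemma card_cov m : (m.+1)`! * (m.+2) ^ m * 'C(m.+2, 2) <= #|cov m.+2|.
Proof.
rewrite -card_D0 -(card_in_imset (@mkc_inj m)).
apply: subset_leq_card; apply/subsetP => c /imsetP [x xD ->]; exact: mkc_cov.
Qed.
Section Ped.
Variables n d : nat.

Definition lo (i : 'I_d) : 'I_d.+1 := widen_ord (leqnSn d) i.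
Definition hi (i : 'I_d) : 'I_d.+1 := lift ord0 i.

Lemma lo_inj : injective lo.
Proof. by move=> i j /(congr1 val) /= /val_inj. Qed.
Lemma hi_inj : injective hi.
Proof. exact: lift_inj. Qed.
Lemma hiE i : val (hi i) = (val i).+1.
Proof. exact: lift0. Qed.

Lemma dg_arc (A : parcs n d) u v : is_dgped A -> (u, v) \in A ->
  val v.1 = (val u.1).+1.
Proof.
by case/and3P => /forallP /(_ u) /forallP /(_ v) /implyP H _ _ /H /eqP.
Qed.

Lemma dg_out (A : parcs n d) (u : pvert n d) : is_dgped A -> val u.1 < d ->
  #|[set v | (u, v) \in A]| = 2.
Proof.
by case/and3P => _ /forallP /(_ u) /implyP H _ /H /eqP.
Qed.

Lemma dg_lohi (A : parcs n d) (u v : pvert n d) : is_dgped A -> (u, v) \in A ->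
  exists i : 'I_d, u.1 = lo i /\ v.1 = hi i.
Proof.
move=> dA uv; have e := dg_arc dA uv.
have lt : val u.1 < d by rewrite -ltnS -e ltn_ord.
exists (Ordinal lt); split; apply: val_inj => //=; rewrite e.
Qed.

Definition outs (A : parcs n d) (x : 'I_d * 'I_n) : {set 'I_n} :=
  [set k | ((lo x.1, x.2), (hi x.1, k)) \in A].

Definition Fmap (A : parcs n d) : {ffun 'I_d * 'I_n -> {set 'I_n}} :=
  [ffun x => outs A x].

Lemma Fmap_inj : {in [set A | is_dgped A] &, injective Fmap}.
Proof.
have H : forall A B : parcs n d, is_dgped A -> Fmap A = Fmap B -> {subset A <= B}.
  move=> A B dA E [u v] uv.
  have [i [e1 e2]] := dg_lohi dA uv.
  have := congr1 (fun F : {ffun 'I_d * 'I_n -> {set 'I_n}} => v.2 \in F (i, u.2)) E.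
  rewrite /Fmap !ffunE /outs !inE /= -e1 -e2 -!surjective_pairing uv.
  by move <-.
move=> A B; rewrite !inE => dA dB E; apply/setP => x.
by apply/idP/idP; [apply: H | apply: H]; rewrite // E.
Qed.

Lemma outs_card (A : parcs n d) x : is_dgped A -> #|outs A x| = 2.
Proof.
move=> dA.
have lt : val (lo x.1) < d by rewrite /= ltn_ord.
rewrite -(dg_out (u := (lo x.1, x.2)) dA lt).
have -> : [set v | ((lo x.1, x.2), v) \in A] = [set (hi x.1, k) | k in outs A x].
  apply/setP => v; rewrite inE; apply/idP/imsetP.
    move=> uv; have [i [e1 e2]] := dg_lohi dA uv.
    have ei : i = x.1 by apply: lo_inj; rewrite -e1.
    exists v.2; last by rewrite [v]surjective_pairing e2 ei.
    rewrite /outs inE.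
    by have -> : (hi x.1, v.2) = v by rewrite -ei -e2 -surjective_pairing.
  by move=> [k]; rewrite inE => kA ->.
rewrite card_imset //; move=> k k' [] //.
Qed.

Definition Dset := [set A : parcs n d | is_dgped A].

Lemma upper : #|Dset| <= 'C(n, 2) ^ (n * d).
Proof.
rewrite -(card_in_imset Fmap_inj).
have -> : 'C(n, 2) ^ (n * d) = #|ffun_on_mem ('I_d * 'I_n)%type (mem [set p : {set 'I_n} | #|p| == 2])|.
  by rewrite card_ffun_on card_draws card_prod !card_ord mulnC.
apply: subset_leq_card; apply/subsetP => F /imsetP [A].
rewrite inE => dA ->; apply/ffun_onP => x; rewrite /Fmap ffunE inE outs_card //.
Qed.

Implicit Types (c : {ffun 'I_d -> {ffun 'I_n -> {set 'I_n}}}) (i : 'I_d) (j : 'I_n) (v : pvert n d).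
Definition Bld (c : {ffun 'I_d -> {ffun 'I_n -> {set 'I_n}}}) : parcs n d :=
  [set x : pvert n d * pvert n d | [exists i : 'I_d,
     [&& x.1.1 == lo i, x.2.1 == hi i & x.2.2 \in c i x.1.2]]].

Lemma Bld_mem c i j v : (((lo i, j), v) \in Bld c) = (v.1 == hi i) && (v.2 \in c i j).
Proof.
rewrite inE; apply/existsP/andP => [[i' /and3P [/eqP /= /lo_inj <- -> ->]] //|[e1 e2]].
by exists i; rewrite eqxx e1 e2.
Qed.

Lemma Bld_dg c : 0 < d -> (forall i, c i \in cov n) -> is_dgped (Bld c).
Proof.
move=> d0 cc.
have outset : forall i j, [set v | ((lo i, j), v) \in Bld c] = [set (hi i, k) | k in c i j].
  move=> i j; apply/setP => v; rewrite inE Bld_mem; apply/andP/imsetP.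
    by move=> [/eqP e1 e2]; exists v.2 => //; rewrite [v]surjective_pairing e1.
  by move=> [k kc ->]; rewrite eqxx.
have lou : forall u : pvert n d, val u.1 < d -> exists i, u = (lo i, u.2).
  move=> [u1 u2] /= lt; exists (Ordinal lt); congr pair.
  by apply: val_inj.
apply/and3P; split.
- apply/forallP => u; apply/forallP => v; apply/implyP; rewrite inE.
  by case/existsP => i /and3P [/eqP -> /eqP -> _]; rewrite hiE.
- apply/forallP => u; apply/implyP => /lou [i ->]; rewrite outset card_imset; last first.
    by move=> k k' [].
  by move: (cc i); rewrite inE => /andP [/forallP /(_ u.2)].
- apply/forallP => u; case: (ltnP (val u.1) d) => [lt|ge].
    have [i eu] := lou u lt.
    move: (cc i); rewrite inE => /andP [/forallP /(_ u.2) /eqP c2 _].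
    have : 0 < #|c i u.2| by rewrite c2.
    case/card_gt0P => k kc; apply/existsP; exists (hi i, k).
    by rewrite eu Bld_mem eqxx kc.
  have ud : val u.1 = d by apply/eqP; rewrite eqn_leq ge -ltnS ltn_ord.
  have lt : (d.-1 < d)%N by rewrite prednK.
  set i := Ordinal lt.
  have ehi : u.1 = hi i by apply: val_inj; rewrite hiE /= prednK.
  move: (cc i); rewrite inE => /andP [_ /forallP /(_ u.2) /existsP [j kj]].
  apply/existsP; exists (lo i, j); apply/orP; right.
  by rewrite Bld_mem ehi eqxx kj.
Qed.

Lemma FBld c : Fmap (Bld c) = [ffun x => c x.1 x.2].
Proof.
apply/ffunP => x; rewrite !ffunE; apply/setP => k.
by rewrite /outs inE Bld_mem eqxx.
Qed.

Lemma lower_D : 0 < d -> #|cov n| ^ d <= #|Dset|.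
Proof.
move=> d0.
set Fam := [set c : {ffun 'I_d -> {ffun 'I_n -> {set 'I_n}}} | c \in ffun_on (cov n)].
have cF : #|Fam| = #|cov n| ^ d by rewrite cardsE card_ffun_on card_ord.
have inj : {in Fam &, injective Bld}.
  move=> c c' _ _ E; apply/ffunP => i; apply/ffunP => j.
  have := congr1 (fun F : {ffun 'I_d * 'I_n -> {set 'I_n}} => F (i, j)) (congr1 Fmap E).
  by rewrite !FBld !ffunE.
rewrite -cF -(card_in_imset inj); apply: subset_leq_card; apply/subsetP => A.
case/imsetP => c; rewrite inE => /ffun_onP cc ->; rewrite inE; exact: Bld_dg.
Qed.

Definition phi (tau : {ffun 'I_d -> {perm 'I_n}}) (u : pvert n d) : pvert n d :=
  match unlift ord0 u.1 with Some i => (u.1, tau i u.2) | None => u end.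

Definition gimg (A : parcs n d) tau : parcs n d :=
  [set (phi tau x.1, phi tau x.2) | x in A].

Definition cls (A : parcs n d) := [set B : parcs n d | is_dgped B && ped_iso A B].

Lemma lvl_pres (A B : parcs n d) (f : {perm pvert n d}) :
  is_dgped A -> is_dgped B ->
  (forall u v, ((u, v) \in A) = ((f u, f v) \in B)) ->
  forall u, (f u).1 = u.1.
Proof.
move=> dA dB fA.
suff H : forall k u, d - val u.1 = k -> (f u).1 = u.1 by move=> u; exact: H.
elim=> [|k IH] u.
  move=> /eqP; rewrite subn_eq0 => ge.
  have ud : val u.1 = d by apply/eqP; rewrite eqn_leq ge -ltnS ltn_ord.
  apply: val_inj; rewrite ud; apply/eqP; rewrite eqn_leq -ltnS ltn_ord /= leqNgt.
  apply/negP => lt.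
  have : 0 < #|[set v | (f u, v) \in B]| by rewrite (dg_out dB lt).
  case/card_gt0P => w; rewrite inE -{1}(permKV f w) -fA => /(dg_arc dA).
  by rewrite ud => e; have := ltn_ord ((f^-1)%g w).1; rewrite e ltnn.
move=> ek.
have lt : val u.1 < d by rewrite -subn_gt0 ek.
have : 0 < #|[set v | (u, v) \in A]| by rewrite (dg_out dA lt).
case/card_gt0P => v; rewrite inE => uv.
have ev := dg_arc dA uv.
have fv : (f v).1 = v.1 by apply: IH; rewrite ev subnS ek.
move: uv; rewrite fA => /(dg_arc dB); rewrite fv ev => -[] e.
by apply: val_inj.
Qed.

Lemma cls_sub (A : parcs n d) : is_dgped A ->
  cls A \subset [set gimg A tau | tau in [set: {ffun 'I_d -> {perm 'I_n}}]].
Proof.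
move=> dA; apply/subsetP => B; rewrite inE => /andP [dB /existsP [f /andP [fix0 fA]]].
have fA' : forall u v, ((u, v) \in A) = ((f u, f v) \in B).
  by move=> u v; move/forallP: fA => /(_ u) /forallP /(_ v) /eqP.
have lv := lvl_pres dA dB fA'.
have fsnd : forall i, injective (fun j : 'I_n => (f (hi i, j)).2).
  move=> i j j' e; have : f (hi i, j) = f (hi i, j').
    by rewrite [f (hi i, j)]surjective_pairing [f (hi i, j')]surjective_pairing !lv e.
  by move/perm_inj => [].
pose tau := [ffun i => perm (fsnd i)].
have phif : forall u, phi tau u = f u.
  move=> [u1 u2]; rewrite /phi /=; case: unliftP => [i ->|->].
    by rewrite ffunE permE [f _]surjective_pairing lv.
  by move/forallP: fix0 => /(_ u2) /eqP ->.
apply/imsetP; exists tau; first by rewrite inE.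
apply/setP => [[x y]]; apply/idP/imsetP.
  move=> xy; exists ((f^-1)%g x, (f^-1)%g y); first by rewrite fA' !permKV.
  by rewrite /= !phif !permKV.
by move=> [[u v] uv [-> ->]]; rewrite /= !phif -fA'.
Qed.

Lemma cls_card (A : parcs n d) : is_dgped A -> #|cls A| <= (n`!) ^ d.
Proof.
move=> dA; apply: leq_trans (subset_leq_card (cls_sub dA)) _.
apply: leq_trans (leq_imset_card _ _) _.
by rewrite cardsT card_ffun card_Sn card_ord.
Qed.

Lemma iso_refl (A : parcs n d) : ped_iso A A.
Proof.
apply/existsP; exists 1%g; apply/andP; split.
  by apply/forallP => j; rewrite perm1.
by apply/forallP => u; apply/forallP => v; rewrite !perm1.
Qed.

Lemma orbit_bound : #|Dset| <= Nped n d * (n`!) ^ d.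
Proof.
have -> : Nped n d = #|[set cls A | A in Dset]| by [].
rewrite -sum1_card (partition_big_imset cls) /= -sum_nat_const.
apply: leq_sum => K /imsetP [A0 A0D ->].
have dA0 : is_dgped A0 by move: A0D; rewrite inE.
rewrite sum1_card; apply: leq_trans (cls_card dA0).
apply: subset_leq_card; apply/subsetP => A; rewrite unfold_in /= inE => /andP [dA /eqP eK].
by rewrite -eK inE dA iso_refl.
Qed.

End Ped.
From mathcomp Require Import ring.
Unset Implicit Arguments.
Import Order.TTheory GRing.Theory Num.Theory.

Lemma key_nat m : 2 * ((m.+1)`! * (m.+2) ^ m * 'C(m.+2, 2)) =
  (m.+1 * (m.+2) ^ m) * (m.+2)`!.
Proof.
have hb : 2 * 'C(m.+2, 2) = m.+2 * m.+1.
  by have := mul_bin_diag m.+2 1; rewrite /= bin1 => <-.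
rewrite mulnCA hb !factS.
move: (m`!) ((m.+2) ^ m) => a b.
ring.
Qed.

Local Open Scope ring_scope.

Theorem mainTheorem7 (n d : nat) (hn : (2 <= n)%N) (hd : (1 <= d)%N) :
  ((((n - 1) * n ^ (n - 2))%N%:R / 2%:R) ^+ d <= (Nped n d)%:R :> rat)
  /\ (Nped n d <= 'C(n, 2) ^ (n * d))%N.
Proof.
case: n hn => [|[|m]] // _.
split; last first.
  exact: leq_trans (leq_imset_card _ _) (upper m.+2 d).
set P := ((m.+1)`! * (m.+2) ^ m * 'C(m.+2, 2))%N.
set F := ((m.+2)`!)%N.
have h1 : (P ^ d <= Nped m.+2 d * F ^ d)%N.
  apply: leq_trans (orbit_bound m.+2 d).
  apply: leq_trans (lower_D m.+2 hd).
  by rewrite leq_exp2r // card_cov.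
have -> : (m.+2 - 1 = m.+1)%N by rewrite subSS subn0.
have -> : (m.+2 - 2 = m)%N by rewrite !subSS subn0.
set X := (_ / _ : rat).
have XF : X * F%:R = P%:R.
  rewrite /X mulrAC -natrM -key_nat natrM mulrC mulrA mulVf ?mul1r //.
have Fpos : (0 : rat) < F%:R ^+ d by rewrite exprn_gt0 // ltr0n fact_gt0.
rewrite -(ler_pM2r Fpos) -exprMn XF -natrX -natrX -natrM ler_nat.
exact: h1.
Qed.
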